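(* Let $\Gamma$ be a distance-regular graph with diameter $D\ge3$ which is neither bipartite nor almost bipartite. Let $\sigma_0,\dots,\sigma_D$ and $\rho_0,\dots,\rho_D$ be nontrivial pseudo cosine sequences forming a tight pair, and assume $\varepsilon=1$ is an auxiliary parameter for this pair. Then: (i) $\rho_i=(-1)^i$ for $0\le i\le D-1$ and $\rho_D\ne(-1)^D$; (ii) $\sigma_{D-1}=\sigma_D$; (iii) $a_i=0$ for $0\le i\le D-2$ and $a_{D-1}\ne0$.
   Context: $\Gamma$ is a finite connected undirected graph without loops or multiple edges, distance-regular with diameter $D$, intersection numbers $a_i,b_i,c_i$ ($c_0=0$, $b_D=0$), valency $k$, $c_i+a_i+b_i=k$. Bipartite: $a_i=0$ for all $0\le i\le D$; almost bipartite: $a_D\ne0$, $a_i=0$ for $0\le i\le D-1$. For $\theta\in\mathbb{R}$ the pseudo cosine sequence for $\theta$ is the sequence of reals $\sigma_0,\dots,\sigma_D$ with $\sigma_0=1$ and $c_i\sigma_{i-1}+a_i\sigma_i+b_i\sigma_{i+1}=\theta\sigma_i$ for $0\le i\le D-1$; nontrivial means $\sigma_1\ne1$. Pseudo cosine sequences $\sigma_i$, $\rho_i$ form a tight pair if $(\sigma_i\rho_i)_{i=0}^D$ is a pseudo cosine sequence. For a tight pair of nontrivial pseudo cosine sequences, an auxiliary parameter is a real $\varepsilon$ with $\sigma_i\rho_i-\sigma_{i-1}\rho_{i-1}=\varepsilon(\sigma_{i-1}\rho_i-\sigma_i\rho_{i-1})$ for $1\le i\le D$. *)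

(* Defs.v *)
From mathcomp Require Import all_boot all_order all_algebra.
Set Implicit Arguments. Unset Strict Implicit. Unset Printing Implicit Defensive.
Import Order.TTheory GRing.Theory Num.Theory.

Section Graph.
Variable T : finType.
Variable e : rel T.

Fixpoint ball (n : nat) (x : T) : {set T} :=
  match n with
  | 0 => [set x]
  | n'.+1 => ball n' x :|: [set z | [exists y in ball n' x, e y z]]
  end.

(* graph distance (path length of a shortest path); for unreachable y
   it returns #|T| (irrelevant for connected graphs) *)
Definition gdist (x y : T) : nat := find (fun n => y \in ball n x) (iota 0 #|T|).

Definition distance_regular (D : nat) (a b c : nat -> nat) : Prop :=
  [/\ symmetric e, irreflexive e, (forall x y, connect e x y),
      ((forall x y, gdist x y <= D) /\ (exists x y, gdist x y = D)) &
      (forall (i : nat) (x y : T), gdist x y = i ->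
         [/\ #|[set z | e y z & (gdist x z).+1 == i]| = c i,
             #|[set z | e y z & gdist x z == i]| = a i &
             #|[set z | e y z & gdist x z == i.+1]| = b i])].
End Graph.

Local Open Scope ring_scope.

Section Cosine.
Variable R : realFieldType.
Variables (D : nat) (a b c : nat -> nat).

(* pseudo cosine sequence for theta (indices 0..D); c_0 = 0 so the i = 0 term
   c_0 * sigma_{0-1} vanishes *)
Definition pseudo_cosine (theta : R) (s : nat -> R) : Prop :=
  s 0%N = 1 /\
  forall i : nat, (i < D)%N ->
    (c i)%:R * s i.-1 + (a i)%:R * s i + (b i)%:R * s i.+1 = theta * s i.

Definition is_pseudo_cosine (s : nat -> R) : Prop := exists theta, pseudo_cosine theta s.

Definition nontrivial_pc (s : nat -> R) : Prop := is_pseudo_cosine s /\ s 1%N != 1.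

Definition tight_pair (s r : nat -> R) : Prop :=
  is_pseudo_cosine s /\ is_pseudo_cosine r /\ is_pseudo_cosine (fun i => s i * r i).

Definition auxiliary_parameter (s r : nat -> R) (eps : R) : Prop :=
  forall i : nat, (1 <= i <= D)%N ->
    s i * r i - s i.-1 * r i.-1 = eps * (s i.-1 * r i - s i * r i.-1).
End Cosine.

Definition bipartite_ia (D : nat) (a : nat -> nat) : Prop :=
  forall i, (i <= D)%N -> a i = 0%N.

Definition almost_bipartite_ia (D : nat) (a : nat -> nat) : Prop :=
  a D <> 0%N /\ forall i, (i <= D.-1)%N -> a i = 0%N.

(* Main.v *)
Require Import Defs.
From mathcomp Require Import all_boot all_order all_algebra.
From mathcomp Require Import zify ring lra.
Import Order.TTheory GRing.Theory Num.Theory.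
Set Implicit Arguments. Unset Strict Implicit.

Section G.
Variables (T : finType) (e : rel T).
Hypotheses (esym : symmetric e) (eirr : irreflexive e)
  (econn : forall x y, connect e x y).

Lemma ball_sub n x : ball e n x \subset ball e n.+1 x.
Proof. by rewrite /= subsetUl. Qed.

Lemma ball_subn n m x : (n <= m)%N -> ball e n x \subset ball e m x.
Proof.
elim: m => [|m IH]; first by rewrite leqn0 => /eqP ->.
rewrite leq_eqVlt => /orP [/eqP -> //| ltnm].
exact: subset_trans (IH ltnm) (ball_sub m x).
Qed.

Lemma ball_step n x z y : e x z -> y \in ball e n z -> y \in ball e n.+1 x.
Proof.
elim: n y => [|n IH] y exz.
  rewrite /= inE => /eqP ->. rewrite in_setU; apply/orP; right.
  rewrite inE; apply/existsP; exists x; by rewrite inE eqxx.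
rewrite [ball e n.+1 z]/= in_setU => /orP [H|].
  exact: (subsetP (ball_sub _ _)) (IH _ exz H).
rewrite inE => /existsP [w /andP [wb ewy]].
rewrite [ball e n.+2 x]/= in_setU; apply/orP; right; rewrite inE.
apply/existsP; exists w; by rewrite IH.
Qed.

Lemma path_ball x p : path e x p -> last x p \in ball e (size p) x.
Proof.
elim: p x => [|z p IH] x /=; first by rewrite inE.
case/andP=> exz pp. exact: ball_step exz (IH _ pp).
Qed.

Lemma reach x y : exists2 n, (n < #|T|)%N & y \in ball e n x.
Proof.
have /connectP [p pp ->] := econn x y.
case/shortenP: pp => p' pp' up' _.
exists (size p'); last exact: path_ball.
have := max_card (mem (x :: p')). by rewrite (card_uniqP up').
Qed.

Lemma ball_gdist x y m : (y \in ball e m x) = (gdist e x y <= m)%N.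
Proof.
have [n ltn yn] := reach x y.
have hs : has (fun n => y \in ball e n x) (iota 0 #|T|).
  apply/hasP; exists n => //; by rewrite mem_iota.
have := hs; rewrite has_find size_iota => ltg.
have Pg : y \in ball e (gdist e x y) x.
  have := nth_find 0 hs; rewrite nth_iota //.
apply/idP/idP => [ym|lem].
  rewrite leqNgt; apply/negP => ltm.
  have := before_find 0 ltm. rewrite nth_iota ?add0n ?ym //. exact: ltn_trans ltm ltg.
exact: (subsetP (@ball_subn _ _ x lem)) _ Pg.
Qed.

Lemma gdist0 x y : (gdist e x y == 0%N) = (y == x).
Proof. by rewrite -leqn0 -ball_gdist /= inE. Qed.

Lemma gdist_adj x y z : e y z -> (gdist e x z <= (gdist e x y).+1)%N.
Proof.
move=> eyz; rewrite -ball_gdist /= in_setU; apply/orP; right; rewrite inE.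
apply/existsP; exists y; by rewrite ball_gdist leqnn eyz.
Qed.

Lemma gdist_down x y i : gdist e x y = i.+1 -> exists z, e y z /\ gdist e x z = i.
Proof.
move=> gi.
have : y \in ball e i.+1 x by rewrite ball_gdist gi.
have : y \notin ball e i x by rewrite ball_gdist gi ltnn.
move=> nyi; rewrite /= in_setU (negbTE nyi) /= inE => /existsP [w /andP [wb ewy]].
exists w; split; first by rewrite esym.
move: wb; rewrite ball_gdist => wi.
have := @gdist_adj x w y ewy; rewrite gi; lia.
Qed.

End G.

Lemma card_sum (T : finType) (A : {set T}) : #|A| = (\sum_z (z \in A : nat))%N.
Proof. by rewrite -sum1_card big_mkcond. Qed.

Section DRG.
Variables (T : finType) (e : rel T) (D : nat) (a b c : nat -> nat).
Hypothesis H : distance_regular e D a b c.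

Let esym : symmetric e. Proof. by case: H. Qed.
Let eirr : irreflexive e. Proof. by case: H. Qed.
Let econn : forall x y, connect e x y. Proof. by case: H. Qed.
Let Hi : forall i x y, gdist e x y = i ->
  [/\ #|[set z | e y z & (gdist e x z).+1 == i]| = c i,
      #|[set z | e y z & gdist e x z == i]| = a i &
      #|[set z | e y z & gdist e x z == i.+1]| = b i].
Proof. by case: H. Qed.

Let g0 x : gdist e x x = 0%N. Proof. apply/eqP; by rewrite (gdist0 econn). Qed.

Lemma drg_pair i : (i <= D)%N -> exists x y, gdist e x y = i.
Proof.
move=> iD. have [_ _ _ [_ [x [y xy]]] _] := H.
suff: forall m, (m <= D)%N -> exists y, gdist e x y = (D - m)%N.
  move/(_ (D - i)%N (leq_subr _ _)). rewrite subKn //. move=> [y' ?]; by exists x, y'.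
elim=> [|m IH] mD; first by exists y; rewrite subn0.
have [y' hy'] := IH (ltnW mD).
have : gdist e x y' = (D - m.+1).+1 by rewrite hy'; lia.
case/(gdist_down esym econn) => z [_ hz]; by exists z.
Qed.

Lemma drg_c0 : c 0%N = 0%N.
Proof.
have [x [y _]] := drg_pair (leq0n D).
have [<- _ _] := Hi (g0 x).
apply/eqP; rewrite cards_eq0; apply/eqP/setP => z; by rewrite !inE andbF.
Qed.

Lemma drg_a0 : a 0%N = 0%N.
Proof.
have [x [y _]] := drg_pair (leq0n D).
have [_ <- _] := Hi (g0 x).
apply/eqP; rewrite cards_eq0; apply/eqP/setP => z; rewrite !inE (gdist0 econn).
by case: eqP => [->|]; rewrite ?eirr ?andbF.
Qed.

Lemma drg_deg y : #|[set z | e y z]| = b 0%N.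
Proof.
have [_ _ <-] := Hi (g0 y).
apply: eq_card => z; rewrite !inE.
case ey: (e y z) => //=.
have h1 := gdist_adj econn y ey; rewrite g0 in h1.
have h2 : gdist e y z != 0%N.
  rewrite (gdist0 econn); apply/eqP => zy; by rewrite zy eirr in ey.
symmetry; apply/eqP; lia.
Qed.

Lemma drg_k i : (i <= D)%N -> (c i + a i + b i)%N = b 0%N.
Proof.
move=> iD; have [x [y xy]] := drg_pair iD.
have [<- <- <-] := Hi xy.
rewrite -(drg_deg y) !card_sum -!big_split; apply: eq_bigr => z _; rewrite !inE.
case ey: (e y z) => //=.
have h1 := gdist_adj econn x ey.
have h2 : (gdist e x y <= (gdist e x z).+1)%N by apply: (gdist_adj econn); rewrite esym.
rewrite xy in h1 h2.
do 3 case: eqP => /= ?; lia.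
Qed.

Lemma drg_c i : (0 < i <= D)%N -> (0 < c i)%N.
Proof.
case: i => // i /= iD; have [x [y xy]] := drg_pair iD.
have [<- _ _] := Hi xy.
have [z [eyz hz]] := gdist_down esym econn xy.
apply/card_gt0P; exists z; by rewrite !inE eyz hz eqxx.
Qed.

Lemma drg_b i : (i < D)%N -> (0 < b i)%N.
Proof.
move=> iD; have [x [y xy]] := drg_pair iD.
have [z [eyz hz]] := gdist_down esym econn xy.
have [_ _ <-] := Hi hz.
apply/card_gt0P; exists y; by rewrite !inE esym eyz xy eqxx.
Qed.

End DRG.
Unset Implicit Arguments.
Local Open Scope ring_scope.

Lemma aux_split (R : realFieldType) (s r : nat -> R) i :
  s i * r i - s i.-1 * r i.-1 = 1 * (s i.-1 * r i - s i * r i.-1) ->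
  s i = s i.-1 \/ r i = - r i.-1.
Proof.
move=> E.
have : (s i - s i.-1) * (r i + r i.-1) = 0.
  have -> : (s i - s i.-1) * (r i + r i.-1) =
    (s i * r i - s i.-1 * r i.-1) - 1 * (s i.-1 * r i - s i * r i.-1) by ring.
  by rewrite E subrr.
move/eqP; rewrite mulf_eq0 => /orP [] /eqP h; [left | right]; apply/eqP.
  by rewrite -subr_eq0 h.
by rewrite -subr_eq0 opprK h.
Qed.

Lemma sgnpred (R : ringType) j : (0 < j)%N -> (-1) ^+ j.-1 = - (-1) ^+ j :> R.
Proof. by case: j => // j _; rewrite exprS mulN1r opprK. Qed.

Theorem lemma8p2 (T : finType) (e : rel T) (D : nat) (a b c : nat -> nat)
  (R : realFieldType) (s r : nat -> R) :
  distance_regular e D a b c ->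
  (3 <= D)%N ->
  ~ bipartite_ia D a ->
  ~ almost_bipartite_ia D a ->
  nontrivial_pc D a b c s ->
  nontrivial_pc D a b c r ->
  tight_pair D a b c s r ->
  auxiliary_parameter D s r 1 ->
  [/\ (forall i : nat, (i <= D.-1)%N -> r i = (-1) ^+ i) /\ r D != (-1) ^+ D,
      s D.-1 = s D &
      (forall i : nat, (i <= D.-2)%N -> a i = 0%N) /\ a D.-1 <> 0%N].
Proof.
move=> Hdr D3 nbip nabip [[th [s0 Hs]] s1] [[ph [r0 Hr]] _] _ Haux.
have c0 := drg_c0 Hdr. have a0 := drg_a0 Hdr.
have Hk := drg_k Hdr. have Hc := drg_c Hdr. have Hb := drg_b Hdr.
have aux i : (1 <= i <= D)%N -> s i = s i.-1 \/ r i = - r i.-1.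
  by move=> hi; apply: aux_split; apply: Haux.
have kR i : (i <= D)%N -> (b 0%N)%:R = (c i)%:R + (a i)%:R + (b i)%:R :> R.
  by move=> hi; rewrite -(Hk i hi) !natrD.
have b0pos : (0 < b 0%N)%N by apply: Hb; lia.
have b0R : (b 0%N)%:R != 0 :> R by rewrite pnatr_eq0 -lt0n.
have th_eq : th = (b 0%N)%:R * s 1%N.
  have E := Hs 0%N ltac:(lia). rewrite c0 a0 s0 /= in E. lra.
have r1 : r 1%N = -1.
  have [h|h] := aux 1%N ltac:(lia); last by rewrite h r0.
  by rewrite h s0 eqxx in s1.
have ph_eq : ph = - (b 0%N)%:R.
  have E := Hr 0%N ltac:(lia). rewrite c0 a0 r0 r1 /= in E. lra.
have ex : exists i, (i <= D)%N && (a i != 0%N).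
  case: (boolP [exists i : 'I_D.+1, a i != 0%N]) => [/existsP [i Hi]|/existsPn Hn].
    by exists i; rewrite Hi -ltnS ltn_ord.
  exfalso; apply: nbip => i Hi; have := Hn (Ordinal (Hi : (i < D.+1)%N)).
  by move/negPn/eqP.
case: (ex_minnP ex) => t /andP [tD at0] tmin.
have az j : (j < t)%N -> a j = 0%N.
  move=> jt; apply/eqP; apply/negPn/negP => aj.
  have := tmin j; rewrite aj andbT => h; have := h ltac:(lia); lia.
have t1 : (1 <= t)%N.
  by rewrite lt0n; apply: contra at0 => /eqP ->; rewrite a0.
have tD1 : (t < D)%N.
  rewrite ltn_neqAle tD andbT; apply/eqP => tDe; apply: nabip; split.
    by rewrite -tDe; apply/eqP.
  move=> i hi; apply: az; lia.
have rp : forall j, (j <= t)%N -> r j = (-1) ^+ j /\ r j.-1 = (-1) ^+ j.-1.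
  elim=> [|j IH] jt; first by rewrite r0 expr0.
  have [rj rjm] := IH (ltnW jt). split=> //=.
  have E := Hr j ltac:(lia).
  have hc : (c j)%:R * r j.-1 = - ((c j)%:R * (-1) ^+ j) :> R.
    case: j {IH jt E rj} rjm => [|j] rjm; first by rewrite c0 !mulr0n !mul0r oppr0.
    by rewrite rjm sgnpred // mulrN.
  rewrite hc rj ph_eq (kR j ltac:(lia)) (az j jt) in E.
  have bj : (b j)%:R != 0 :> R by rewrite pnatr_eq0 -lt0n; apply: Hb; lia.
  apply: (mulfI bj). rewrite exprS mulN1r. lra.
have [rt rtm] := rp t (leqnn t).
set p := (-1) ^+ t : R.
have pp : p * p = 1 by rewrite /p -expr2 -signr_odd sqrr_sign.
set z := r t.+1.
set q := - (z * p).
have btR : (0 < (b t)%:R :> R) by rewrite ltr0n; apply: Hb.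
have atR : (0 < (a t)%:R :> R) by rewrite ltr0n lt0n.
have hq : (b t)%:R * q = 2 * (a t)%:R + (b t)%:R.
  have Et := Hr t tD1.
  rewrite rt rtm sgnpred // ph_eq (kR t (ltnW tD1)) -/z -/p in Et.
  have bz : (b t)%:R * z = - (2 * (a t)%:R + (b t)%:R) * p by lra.
  by rewrite /q mulrN mulrA bz !mulNr opprK -mulrA pp mulr1.
have q1 : 1 < q by nra.
have zneq : z != - p.
  apply/eqP => zp; move: q1; by rewrite /q zp mulNr opprK pp ltxx.
have sst : s t.+1 = s t.
  have [//|h] := aux t.+1 ltac:(lia).
  by move: zneq; rewrite /z h /= rt eqxx.
have tDeq : t.+1 = D.
  apply/eqP; rewrite eqn_leq tD1 /= leqNgt; apply/negP => lt2.
  have [h|h] := aux t.+2 ltac:(lia); rewrite /= in h.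
  -
    set v := s t.
    have E := Hs t.+1 lt2.
    rewrite /= h sst -/v th_eq (kR t.+1 (ltnW lt2)) in E.
    have v0 : v = 0.
      have : (b 0%N)%:R * (v * (1 - s 1%N)) = 0.
        rewrite (kR t.+1 (ltnW lt2)).
        have -> : ((c t.+1)%:R + (a t.+1)%:R + (b t.+1)%:R) * (v * (1 - s 1%N)) =
          ((c t.+1)%:R * v + (a t.+1)%:R * v + (b t.+1)%:R * v) -
          ((c t.+1)%:R + (a t.+1)%:R + (b t.+1)%:R) * s 1%N * v by ring.
        by rewrite E subrr.
      move/eqP; rewrite mulf_eq0 (negbTE b0R) /= mulf_eq0 subr_eq0 [1 == _]eq_sym (negbTE s1) orbF.
      by move/eqP.
    have back : forall m, (m <= t)%N -> s (t - m)%N = 0 /\ s (t - m).+1 = 0.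
      elim=> [|m IH] mt; first by rewrite subn0 sst.
      have [h1 h2] := IH (ltnW mt).
      have e1 : (t - m)%N = (t - m.+1).+1 by lia.
      split; last by rewrite -e1.
      have E2 := Hs (t - m)%N ltac:(lia).
      rewrite h1 h2 !mulr0 !addr0 e1 /= in E2.
      have cpos : (c (t - m.+1).+1)%:R != 0 :> R by rewrite pnatr_eq0 -lt0n; apply: Hc; lia.
      by move/eqP: E2; rewrite mulf_eq0 (negbTE cpos) /= => /eqP.
    have [h0 _] := back t (leqnn t).
    by move: h0; rewrite subnn s0; move/eqP; rewrite oner_eq0.
  -
    have E := Hr t.+1 lt2.
    rewrite /= h -/z rt -/p ph_eq (kR t.+1 (ltnW lt2)) in E.
    have E1 : (c t.+1)%:R * p + 2 * (a t.+1)%:R * z + (c t.+1)%:R * z = 0 by lra.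
    have E2 : (c t.+1)%:R * (q - 1) + 2 * (a t.+1)%:R * q = 0.
      have -> : (c t.+1)%:R * (q - 1) + 2 * (a t.+1)%:R * q =
        - p * ((c t.+1)%:R * p + 2 * (a t.+1)%:R * z + (c t.+1)%:R * z)
        + (c t.+1)%:R * (p * p - 1) by rewrite /q; ring.
      by rewrite E1 pp subrr !mulr0 addr0.
    have cR : 0 < (c t.+1)%:R :> R by rewrite ltr0n; apply: Hc; lia.
    have aR : 0 <= (a t.+1)%:R :> R by rewrite ler0n.
    have h1 : 0 < (c t.+1)%:R * (q - 1) by apply: mulr_gt0; lra.
    have h2 : 0 <= (a t.+1)%:R * q by apply: mulr_ge0; lra.
    lra.
subst D.
split.
- split; first by move=> i hi; exact: (rp i hi).1.
  by rewrite exprS mulN1r.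
- by rewrite /= sst.
- split; first by move=> i hi; apply: az; lia.
  by apply/eqP.
Qed.
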